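(* Let $G$ be a first-countable Hausdorff compact topological monoid with neutral element $e$, and let $f:G\to G$ be a closed mapping such that for each $x,y\in G$ and each neighbourhood $V$ of $e$ there exist $z\in G$ and $n\in\mathbb{N}$ with $f^n(x),f^n(y)\in zV$. Then $f$ has a unique fixed point.
   Context: A topological monoid is a semigroup with neutral element, equipped with a topology making multiplication jointly continuous. A mapping is closed if it maps closed sets to closed sets (continuity is not assumed). $zV=\{zv:v\in V\}$; $f^n$ is the $n$-fold iterate of $f$. *)

(* Defs.v *)
From mathcomp Require Import all_boot all_order.
From mathcomp Require Import all_classical all_reals all_analysis.
Set Implicit Arguments. Unset Strict Implicit. Unset Printing Implicit Defensive.
Local Open Scope classical_set_scope.

(* First countability: every point has a countable neighbourhood base
   (indexed by nat, repetitions allowed, so finite bases are included). *)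
Definition first_countable (T : topologicalType) : Prop :=
  forall x : T, exists B : nat -> set T,
    (forall n, nbhs x (B n)) /\ (forall U, nbhs x U -> exists n, B n `<=` U).

Definition closed_map (T : topologicalType) (f : T -> T) : Prop :=
  forall A : set T, closed A -> closed (f @` A).

Definition topological_monoid (T : topologicalType) (mul : T -> T -> T) (e : T)
  : Prop :=
  (forall x y z, mul x (mul y z) = mul (mul x y) z) /\
  (forall x, mul e x = x) /\ (forall x, mul x e = x) /\
  continuous (fun p : T * T => mul p.1 p.2).

Definition lmul_set (T : Type) (mul : T -> T -> T) (z : T) (V : set T) : set T :=
  [set mul z v | v in V].

(* Main.v *)
Require Import Defs.
From mathcomp Require Import all_boot all_order.
From mathcomp Require Import all_classical all_reals all_analysis.
Set Implicit Arguments. Unset Strict Implicit.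
Local Open Scope classical_set_scope.

Lemma sep_pts (T : topologicalType) (hT : hausdorff_space T) (p q : T) :
  p <> q -> exists U W, nbhs p U /\ nbhs q W /\ (forall t, U t -> W t -> False).
Proof.
move=> pq; apply: contrapT => H; apply: pq; apply: hT => A B hA hB.
apply: contrapT => hn; apply: H; exists A, B; split=> //; split=> // t At Bt.
by apply: hn; exists t.
Qed.

Definition sconv (T : topologicalType) (u : nat -> T) (c : T) :=
  forall U, nbhs c U -> exists K, forall k, (K <= k)%N -> U (u k).

Lemma conv_uniq (T : topologicalType) (hT : hausdorff_space T) (u : nat -> T) c d :
  sconv u c -> sconv u d -> c = d.
Proof.
move=> hc hd; apply: contrapT => cd.
have [U [W [hU [hW hUW]]]] := sep_pts hT cd.
have [K1 h1] := hc U hU; have [K2 h2] := hd W hW.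
apply: (hUW (u (maxn K1 K2))); [apply: h1 | apply: h2].
  exact: leq_maxl. exact: leq_maxr.
Qed.

Lemma conv_cst_eq (T : topologicalType) (hT : hausdorff_space T) (c d : T) :
  sconv (fun _ => c) d -> c = d.
Proof.
move=> h; apply: (conv_uniq hT _ h) => U hU; exists 0%N => k _.
exact: nbhs_singleton.
Qed.

Lemma conv_mul (T : topologicalType) (mul : T -> T -> T)
  (hm : continuous (fun p : T * T => mul p.1 p.2)) zs vs z v :
  sconv zs z -> sconv vs v -> sconv (fun k => mul (zs k) (vs k)) (mul z v).
Proof.
move=> hz hv U hU.
have := hm (z, v) U hU.
move=> [[A B] /= [hA hB] hAB].
have [K1 h1] := hz A hA; have [K2 h2] := hv B hB.
exists (maxn K1 K2) => k hk.
have := hAB (zs k, vs k); apply; split.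
  by apply: h1; apply: leq_trans hk; exact: leq_maxl.
by apply: h2; apply: leq_trans hk; exact: leq_maxr.
Qed.

Lemma dec_base (T : topologicalType) (hfc : first_countable T) (x : T) :
  exists B : nat -> set T, (forall n, nbhs x (B n)) /\
    (forall n m, (n <= m)%N -> B m `<=` B n) /\
    (forall U, nbhs x U -> exists n, B n `<=` U).
Proof.
have [B [hB1 hB2]] := hfc x.
pose fix Bd n := match n with 0 => B 0%N | S n' => Bd n' `&` B n end.
exists Bd; split; [|split].
- elim=> [|n IH] //=; exact: filterI.
- move=> n m; elim: m => [|m IH].
    by rewrite leqn0 => /eqP ->.
  rewrite leq_eqVlt => /orP [/eqP -> //|]; rewrite ltnS => /IH h t [/h ht _].
  exact: ht.
- move=> U /hB2 [n hn]; exists n => t ht; apply: hn.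
  by case: n ht => [|n] //= [].
Qed.

Lemma conv_from_base (T : topologicalType) (x : T) (B : nat -> set T) (u : nat -> T) :
  (forall n m, (n <= m)%N -> B m `<=` B n) ->
  (forall U, nbhs x U -> exists n, B n `<=` U) ->
  (forall k, B k (u k)) -> sconv u x.
Proof.
move=> hdec hb hu U /hb [n hn]; exists n => k hk; apply: hn.
exact: (hdec _ _ hk).
Qed.

Lemma subseq_ge (phi : nat -> nat) : (forall n, (phi n < phi n.+1)%N) ->
  forall n, (n <= phi n)%N.
Proof.
move=> h; elim=> [|n IH] //; exact: leq_ltn_trans IH (h n).
Qed.

Lemma seq_compact (T : topologicalType) (hfc : first_countable T)
  (hc : compact [set: T]) (z : nat -> T) :
  exists (phi : nat -> nat) (c : T), (forall n, (phi n < phi n.+1)%N) /\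
     sconv (z \o phi) c.
Proof.
have [c [_ hcl]] := hc (z @ \oo) _ filterT.
have [B [hB1 [hB2 hB3]]] := dec_base hfc c.
have H : forall n m, exists k, (m <= k)%N /\ B n (z k).
  move=> n m.
  have hA : (z @ \oo) [set y | exists k, (m <= k)%N /\ z k = y].
    apply: filterS (nbhs_infty_ge m) => k /= hk; by exists k.
  have [y [[k [hk <-]] hy]] := hcl _ _ hA (hB1 n).
  by exists k.
have [g hg] := @choice (nat * nat) nat (fun nm k => (nm.2 <= k)%N /\ B nm.1 (z k))
  (fun nm => H nm.1 nm.2).
pose fix phi n := match n with 0 => g (0, 0)%N | S n' => g (n, (phi n').+1) end.
exists phi, c; split.
  by move=> n; have [h _] := hg (n.+1, (phi n).+1).
apply: (conv_from_base hB2 hB3) => k /=.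
by case: k => [|k]; [have [_ h] := hg (0, 0)%N | have [_ h] := hg (k.+1, (phi k).+1)].
Qed.

Lemma sconv_ext (T : topologicalType) (u v : nat -> T) c :
  (forall k, u k = v k) -> sconv u c -> sconv v c.
Proof.
move=> h hu U hU; have [K hK] := hu U hU; exists K => k hk; rewrite -h; exact: hK.
Qed.

Lemma closed_tail (T : topologicalType) (hT : hausdorff_space T)
  (b : nat -> T) c m : sconv b c ->
  closed ([set b k | k in [set k | (m <= k)%N]] `|` [set c]).
Proof.
move=> hb y hy; apply: contrapT => ny.
have yc : y <> c by move=> yc; apply: ny; right.
have [U [W [hU [hW hUW]]]] := sep_pts hT yc.
have [K hK] := hb W hW.
have hP : forall j, exists P, nbhs y P /\
    forall k, (m <= k)%N -> (k < j)%N -> ~ P (b k).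
  elim=> [|j [P [hP hPk]]].
    by exists setT; split; [exact: filterT| move=> k _].
  case: (leqP m j) => hmj.
    have byj : y <> b j by move=> yb; apply: ny; left; exists j.
    have [U' [W' [hU' [hW' hUW']]]] := sep_pts hT byj.
    exists (P `&` U'); split; first exact: filterI.
    move=> k hk; rewrite ltnS leq_eqVlt => /orP [/eqP -> | hkj] [hPb hUb].
      exact: hUW' hUb (nbhs_singleton hW').
    exact: hPk k hk hkj hPb.
  exists P; split => // k hk hkj; apply: hPk => //.
  rewrite ltnS in hkj; have := leq_ltn_trans hkj hmj.
  by rewrite ltnNge hk.
have [P [hP' hPk]] := hP K.
have [t [ht [hPt hUt]]] := hy (P `&` U) (filterI hP' hU).
move: hPt hUt; case: ht => [[k hk <-]|->] hPt hUt.
  case: (leqP K k) => hKk.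
    exact: hUW hUt (hK _ hKk).
  exact: hPk k hk hKk hPt.
exact: hUW hUt (nbhs_singleton hW).
Qed.

Lemma sepL (T : topologicalType) (mul : T -> T -> T) (e : T)
  (htm : topological_monoid mul e) (hfc : first_countable T)
  (hT : hausdorff_space T) (hc : compact [set: T]) (u w : T) :
  u <> w -> exists V, nbhs e V /\
     forall z, ~ (lmul_set mul z V u /\ lmul_set mul z V w).
Proof.
move=> uw; apply: contrapT => H.
have [B [hB1 [hB2 hB3]]] := dec_base hfc e.
have H' : forall n, exists zvw : T * T * T, B n zvw.1.2 /\ B n zvw.2 /\
    mul zvw.1.1 zvw.1.2 = u /\ mul zvw.1.1 zvw.2 = w.
  move=> n; apply: contrapT => hn; apply: H; exists (B n); split => //.
  move=> z [[v hv hvu] [v' hv' hvw]]; apply: hn; by exists (z, v, v').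
have [g hg] := choice H'.
have [phi [c [hphi hcv]]] := seq_compact hfc hc (fun n => (g n).1.1).
have hv : sconv (fun n => (g (phi n)).1.2) e.
  apply: (conv_from_base hB2 hB3) => k; have [h _] := hg (phi k).
  exact: hB2 (subseq_ge hphi k) _ h.
have hw : sconv (fun n => (g (phi n)).2) e.
  apply: (conv_from_base hB2 hB3) => k; have [_ [h _]] := hg (phi k).
  exact: hB2 (subseq_ge hphi k) _ h.
have [_ [_ [hre hm]]] := htm.
have hu := conv_mul hm hcv hv; rewrite hre in hu.
have hw' := conv_mul hm hcv hw; rewrite hre in hw'.
have eu : u = c.
  apply: (conv_cst_eq hT); apply: sconv_ext hu => k /=.
  by have [_ [_ [h _]]] := hg (phi k).
have ew : w = c.
  apply: (conv_cst_eq hT); apply: sconv_ext hw' => k /=.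
  by have [_ [_ [_ h]]] := hg (phi k).
by apply: uw; rewrite eu ew.
Qed.

Lemma iterSS (T : Type) (f : T -> T) n x : iter n.+1 f (f x) = f (iter n.+1 f x).
Proof. by rewrite -iterSr. Qed.

Lemma per_fix (T : topologicalType) (mul : T -> T -> T) (e : T) (f : T -> T)
  (htm : topological_monoid mul e) (hfc : first_countable T)
  (hT : hausdorff_space T) (hc : compact [set: T])
  (hyp : forall (x y : T) (V : set T), nbhs e V ->
     exists (z : T) (n : nat),
       lmul_set mul z V (iter n.+1 f x) /\ lmul_set mul z V (iter n.+1 f y))
  (c : T) (N : nat) : iter N.+1 f c = c -> exists p, f p = p.
Proof.
move=> hper; apply: contrapT => nfix.
have hne : forall i, iter i f c <> f (iter i f c).
  by move=> i h; apply: nfix; exists (iter i f c); rewrite -h.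
have hVj : forall j, exists V, nbhs e V /\ forall i, (i < j)%N -> forall z,
   ~ (lmul_set mul z V (iter i f c) /\ lmul_set mul z V (f (iter i f c))).
  elim=> [|j [V [hV hVi]]].
    by exists setT; split; [exact: filterT| move=> i].
  have [V' [hV' hV'j]] := sepL htm hfc hT hc (hne j).
  exists (V `&` V'); split; first exact: filterI.
  move=> i; rewrite ltnS leq_eqVlt => /orP [/eqP -> | hij] z
    [[v [hv hv'] hvu] [v2 [h2 h2'] hvw]].
    by apply: (hV'j z); split; [exists v | exists v2].
  by apply: (hVi i hij z); split; [exists v | exists v2].
have [V [hV hVi]] := hVj N.+1.
have [z [n [h1 h2]]] := hyp c (f c) V hV.
have hq : forall q, iter (q * N.+1) f c = c.
  elim=> [|q IH]; first by rewrite mul0n.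
  by rewrite mulSn iterD IH hper.
have hmod : forall m, iter m f c = iter (m %% N.+1) f c.
  by move=> m; rewrite {1}(divn_eq m N.+1) addnC iterD hq.
rewrite iterSS hmod in h2; rewrite hmod in h1.
apply: (hVi _ _ z (conj h1 h2)).
by rewrite ltn_pmod.
Qed.

Lemma iter_fixed (T : Type) (f : T -> T) p n : f p = p -> iter n f p = p.
Proof. by move=> hp; elim: n => [|n IH] //=; rewrite IH hp. Qed.

Theorem theorem15 (T : topologicalType) (mul : T -> T -> T) (e : T)
  (f : T -> T) :
  topological_monoid mul e ->
  first_countable T ->
  hausdorff_space T ->
  compact [set: T] ->
  closed_map f ->
  (forall (x y : T) (V : set T), nbhs e V ->
     exists (z : T) (n : nat),
       lmul_set mul z V (iter n.+1 f x) /\ lmul_set mul z V (iter n.+1 f y)) ->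
  exists! p : T, f p = p.
Proof.
move=> htm hfc hT hc hf hyp.
have uniq : forall p q, f p = p -> f q = q -> p = q.
  move=> p q hp hq; apply: contrapT => pq.
  have [V [hV hVz]] := sepL htm hfc hT hc pq.
  have [z [n [h1 h2]]] := hyp p q V hV.
  rewrite !iter_fixed // in h1 h2.
  exact: (hVz z (conj h1 h2)).
suff [p hp] : exists p, f p = p.
  by exists p; split => // q hq; apply: uniq.
have [B [hB1 [hB2 hB3]]] := dec_base hfc e.
have H : forall k, exists zn : T * nat * T * T, B k zn.1.2 /\ B k zn.2 /\
    mul zn.1.1.1 zn.1.2 = iter zn.1.1.2.+1 f e /\
    mul zn.1.1.1 zn.2 = f (iter zn.1.1.2.+1 f e).
  move=> k; have [z [n [[v hv hv1] [w hw hw1]]]] := hyp e (f e) (B k) (hB1 k).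
  by exists (z, n, v, w); rewrite /= hv1 hw1 iterSS.
have [g hg] := choice H.
have [phi [c [hphi hcv]]] := seq_compact hfc hc (fun k => (g k).1.1.1).
have hv : sconv (fun n => (g (phi n)).1.2) e.
  apply: (conv_from_base hB2 hB3) => k; have [h _] := hg (phi k).
  exact: hB2 (subseq_ge hphi k) _ h.
have hw : sconv (fun n => (g (phi n)).2) e.
  apply: (conv_from_base hB2 hB3) => k; have [_ [h _]] := hg (phi k).
  exact: hB2 (subseq_ge hphi k) _ h.
have [_ [_ [hre hm]]] := htm.
pose M k := (g (phi k)).1.1.2.
pose b k := iter (M k).+1 f e.
have hb : sconv b c.
  have hu := conv_mul hm hcv hv; rewrite hre in hu.
  apply: sconv_ext hu => k /=.
  by have [_ [_ [h _]]] := hg (phi k).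
have hfb : sconv (fun k => f (b k)) c.
  have hu := conv_mul hm hcv hw; rewrite hre in hu.
  apply: sconv_ext hu => k /=.
  by have [_ [_ [_ h]]] := hg (phi k).
have key : forall m, f c = c \/ exists k, (m <= k)%N /\ f (b k) = c.
  move=> m.
  have hcl := hf _ (@closed_tail T hT b c m hb).
  have : closure (f @` ([set b k | k in [set k | (m <= k)%N]] `|` [set c])) c.
    move=> U hU; have [K hK] := hfb U hU.
    exists (f (b (maxn m K))); split; last by apply: hK; exact: leq_maxr.
    exists (b (maxn m K)) => //; left; exists (maxn m K) => //.
    exact: leq_maxl.
  move=> /hcl [a ha hfa]; move: hfa; case: ha => [[k hk <-]|->] hfa.
    by right; exists k.
  by left.
case: (pselect (f c = c)) => [hfc'|nfc]; first by exists c.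
have key' : forall m, exists k, (m <= k)%N /\ f (b k) = c.
  by move=> m; case: (key m).
have [k1 [_ hk1]] := key' 0%N.
have fbk : forall k, f (b k) = iter (M k).+2 f e by move=> k.
have perd : forall a a', (a < a')%N -> iter a f e = c -> iter a' f e = c ->
    exists p, f p = p.
  move=> a a' haa' ha ha'.
  apply: (@per_fix T mul e f htm hfc hT hc hyp c (a' - a).-1).
  rewrite prednK ?subn_gt0 // -{2}ha' -ha -iterD subnK //.
  exact: ltnW.
case: (pselect (exists k, f (b k) = c /\ M k <> M k1)).
  move=> [k2 [hk2 hne]].
  rewrite fbk in hk1; rewrite fbk in hk2.
  case: (ltngtP (M k1) (M k2)) => hlt.
  - by apply: (perd _ _ _ hk1 hk2); rewrite ltnS.
  - by apply: (perd _ _ _ hk2 hk1); rewrite ltnS.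
  - by exfalso; apply: hne.
move=> nex; exfalso; apply: nfc.
suff eb : b k1 = c by rewrite -{1}eb hk1.
apply: contrapT => bc.
have [U [W [hU [hW hUW]]]] := sep_pts hT bc.
have [K hK] := hb W hW.
have [k [hk hfk]] := key' K.
have eM : M k = M k1.
  by apply: contrapT => hne; apply: nex; exists k.
have ebk : b k = b k1 by rewrite /b eM.
apply: (hUW (b k1)); first exact: nbhs_singleton.
by rewrite -ebk; apply: hK.
Qed.
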